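(* Let $T$ be a doubled graph in $\mathcal F$ that contains no antihole of length six. Then: (1) $T$ is either complete or has an even pair; (2) if $T$ is favorable, then $T$ has an even pair disjoint from its switchable component.
   Context: A trigraph $T$ consists of a finite set $V(T)$ and a map $\theta:\binom{V(T)}{2}\to\{-1,0,1\}$. Two distinct vertices $u,v$ are strongly adjacent if $\theta(uv)=1$, strongly antiadjacent if $\theta(uv)=-1$, and semiadjacent (a switchable pair) if $\theta(uv)=0$; they are adjacent if $\theta(uv)\in\{0,1\}$ and antiadjacent if $\theta(uv)\in\{0,-1\}$. $N(v)$ is the set of vertices adjacent to $v$. An edge (antiedge) is an adjacent (antiadjacent) pair; a strong edge (strong antiedge) is a strongly adjacent (strongly antiadjacent) pair. The complement $\overline T$ has vertex set $V(T)$ and adjacency function $-\theta$. For $X\subseteq V(T)$, $T|X$ is the trigraph on $X$ with $\theta$ restricted, and $T\setminus X=T|(V(T)\setminus X)$; $T$ contains $H$ if $H$ is isomorphic to some $T|X$. A clique is a set of pairwise adjacent vertices; $T$ is complete if $V(T)$ is a clique. A set $X$ is connected if the graph on $X$ whose edges are the adjacent pairs of $T|X$ is connected, and anticonnected if the graph on $X$ whose edges are the antiadjacent pairs of $T|X$ is connected; components (anticomponents) are maximal connected (anticonnected) subsets. A path is a sequence of distinct vertices $p_1,\dots,p_k$ such that $p_i,p_j$ are adjacent when $|i-j|=1$ and antiadjacent when $|i-j|>1$; its length is $k-1$. A hole of length $k\ge5$ consists of vertices $h_1,\dots,h_k$ with $h_i,h_j$ adjacent if $|i-j|\in\{1,k-1\}$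 and antiadjacent otherwise; an antihole is an induced subtrigraph whose complement is a hole of $\overline T$ (length = number of vertices). $T$ is Berge if it contains no hole of odd length and no antihole of odd length. An even pair of $T$ is a strongly antiadjacent pair $\{u,v\}$ such that every path from $u$ to $v$ in $T$ has even length. $\Sigma(T)$ is the graph on $V(T)$ whose edges are the switchable pairs of $T$; a switchable component is a connected component of $\Sigma(T)$ with at least two vertices. $\mathcal F$ is the class of Berge trigraphs $T$ such that: (1) $T$ has at most one switchable component, and it has at most two edges; (2) if the switchable component has exactly one edge $xy$, then $N(x)\cap N(y)=\emptyset$ (it is called small); (3) if it has two edges, with $v$ the vertex of degree two in $\Sigma(T)$ and $x,y$ its neighbours, then $v$ is strongly anticomplete to $V(T)\setminus\{v,x,y\}$, $x$ is strongly antiadjacent to $y$, and $N(x)\cap N(y)=\{v\}$ (it is called light). For $T\in\mathcal F$, $D$ denotes the vertex set of its switchable component ($D=\emptyset$ if $T$ has no switchable pair). A pair $\{u,v\}$ is disjoint from the switchable component if $\{u,v\}\cap D=\emptyset$. A trigraph $T\in\mathcal F$ is favorable if (1) $|V(T)|\ge5$; (2) $T$ has a strongly antiadjacent pair $\{u,v\}$ disjoint from $D$; and (3) if $D=\{x,y\}$ is small, then at least one of $V(T)\setminus(D\cup N(x))$, $V(T)\setminus(D\cup N(y))$ is not a clique. A good partition of $T$ is a partition $(X,Y)$ of $V(T)$ such that every component of $T|X$ and every anticomponent of $T|Y$ has at most two vertices, no switchable pair has one end in $X$ and the other in $Y$, and for every component $C_x$ of $T|X$ and every anticomponent $C_y$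 of $T|Y$, every vertex of $C_x\cup C_y$ is incident with at most one strong edge and at most one strong antiedge between $C_x$ and $C_y$. $T$ is a doubled graph if it has a good partition. *)

(* Defs.v *)
From HB Require Import structures.
From mathcomp Require Import all_boot.
Set Implicit Arguments. Unset Strict Implicit. Unset Printing Implicit Defensive.

(* The three values of the adjacency function theta : Strong = 1, Semi = 0, Anti = -1. *)
Inductive adjv := Strong | Semi | Anti.

Definition adjv_eqb (a b : adjv) : bool :=
  match a, b with
  | Strong, Strong | Semi, Semi | Anti, Anti => true | _, _ => false end.
Lemma adjv_eqP : Equality.axiom adjv_eqb.
Proof. by case; case; constructor. Qed.
HB.instance Definition _ := hasDecEq.Build adjv adjv_eqP.

(* A trigraph is a finite type T with a symmetric map th : T -> T -> adjv
   (values on the diagonal are irrelevant: every notion requires distinctness). *)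
Section Trigraph.
Variables (T : finType) (th : T -> T -> adjv).

Definition sadj (u v : T) : bool := (u != v) && (th u v == Strong).
Definition santi (u v : T) : bool := (u != v) && (th u v == Anti).
Definition semi (u v : T) : bool := (u != v) && (th u v == Semi).
Definition adj (u v : T) : bool := (u != v) && (th u v != Anti).
Definition anti (u v : T) : bool := (u != v) && (th u v != Strong).

Definition nbhd (v : T) : {set T} := [set u | adj v u].

Definition clique (X : {set T}) : Prop :=
  forall u v, u \in X -> v \in X -> u != v -> adj u v.

Definition complete : Prop := clique [set: T].

Definition is_path (p : seq T) : Prop :=
  uniq p /\
  forall (d : T) (i j : nat), i < j -> j < size p ->
    (j = i.+1 -> adj (nth d p i) (nth d p j)) /\
    (i.+1 < j -> anti (nth d p i) (nth d p j)).

Definition path_len (p : seq T) : nat := (size p).-1.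

Definition path_from_to (p : seq T) (u v : T) : Prop :=
  is_path p /\ head u p = u /\ last u p = v /\ 0 < size p.

Definition is_hole (h : seq T) (k : nat) : Prop :=
  size h = k /\ 5 <= k /\ uniq h /\
  forall (d : T) (i j : nat), i < j -> j < k ->
    if (j - i == 1) || (j - i == k - 1)
    then adj (nth d h i) (nth d h j) else anti (nth d h i) (nth d h j).

(* Antihole of length k: its complement (theta negated, which swaps
   adjacent/antiadjacent) is a hole of length k. *)
Definition is_antihole (h : seq T) (k : nat) : Prop :=
  size h = k /\ 5 <= k /\ uniq h /\
  forall (d : T) (i j : nat), i < j -> j < k ->
    if (j - i == 1) || (j - i == k - 1)
    then anti (nth d h i) (nth d h j) else adj (nth d h i) (nth d h j).

Definition has_antihole (k : nat) : Prop := exists h, is_antihole h k.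

Definition berge : Prop :=
  (forall h k, is_hole h k -> ~~ odd k) /\ (forall h k, is_antihole h k -> ~~ odd k).

(* Switchable components: components of Sigma(T) with at least two vertices *)
Definition scomp (x : T) : {set T} := [set y | connect semi x y].
Definition swcomp (C : {set T}) : Prop := exists x, C = scomp x /\ 1 < #|C|.
Definition nedges (C : {set T}) : nat :=
  #|[set p : T * T | (p.1 \in C) && (p.2 \in C) && semi p.1 p.2]| %/ 2.
Definition Dset : {set T} := [set x | 1 < #|scomp x|].

Definition inF : Prop :=
  berge /\
  (forall C1 C2, swcomp C1 -> swcomp C2 -> C1 = C2) /\
  (forall C, swcomp C -> nedges C <= 2) /\
  (forall C x y, swcomp C -> nedges C = 1 -> x \in C -> semi x y ->
     nbhd x :&: nbhd y = set0) /\
  (forall C v x y, swcomp C -> nedges C = 2 -> v \in C ->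
     semi v x -> semi v y -> x != y ->
     (forall w, w \notin [set v; x; y] -> santi v w) /\ santi x y /\
     nbhd x :&: nbhd y = [set v]).

Definition favorable : Prop :=
  inF /\ 5 <= #|T| /\
  (exists u v, santi u v /\ u \notin Dset /\ v \notin Dset) /\
  (forall x y, semi x y -> nedges (scomp x) = 1 ->
     ~ clique (~: (Dset :|: nbhd x)) \/ ~ clique (~: (Dset :|: nbhd y))).

Definition even_pair (u v : T) : Prop :=
  santi u v /\ forall p, path_from_to p u v -> ~~ odd (path_len p).

Definition rel_in (X : {set T}) (r : T -> T -> bool) : rel T :=
  fun a b => [&& r a b, a \in X & b \in X].
Definition compX (X : {set T}) (x : T) : {set T} := [set y | connect (rel_in X adj) x y].
Definition acompY (Y : {set T}) (y : T) : {set T} := [set z | connect (rel_in Y anti) y z].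

Definition good_partition (X Y : {set T}) : Prop :=
  [disjoint X & Y] /\ X :|: Y = [set: T] /\
  (forall x, x \in X -> #|compX X x| <= 2) /\
  (forall y, y \in Y -> #|acompY Y y| <= 2) /\
  (forall a b, semi a b -> ~ (a \in X /\ b \in Y)) /\
  (forall x y, x \in X -> y \in Y ->
     let Cx := compX X x in let Cy := acompY Y y in
     (forall w, w \in Cx ->
        #|[set z in Cy | sadj w z]| <= 1 /\ #|[set z in Cy | santi w z]| <= 1) /\
     (forall w, w \in Cy ->
        #|[set z in Cx | sadj w z]| <= 1 /\ #|[set z in Cx | santi w z]| <= 1)).

Definition doubled : Prop := exists X Y, good_partition X Y.

End Trigraph.

(* Main.v *)
Require Import Defs.
From mathcomp Require Import all_boot.
From Stdlib Require Import Classical.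
From mathcomp Require Import zify.
Set Implicit Arguments. Unset Strict Implicit. Unset Printing Implicit Defensive.

Ltac keep t := lazymatch t with
 | is_true (leq _ _) => idtac
 | is_true (~~ (?a == _)) => let ty := type of a in constr_eq ty nat
 | (?a = _) => let ty := type of a in constr_eq ty nat
 | _ => fail end.
Ltac li := repeat match goal with H : ?t |- _ => tryif keep t then fail else clear H end; lia.

Section Main.
Variables (T : finType) (th : T -> T -> adjv).
Hypothesis th_sym : forall u v, th u v = th v u.

Local Notation adj := (adj th).
Local Notation anti := (anti th).
Local Notation sadj := (sadj th).
Local Notation santi := (santi th).
Local Notation semi := (semi th).

Lemma adj_sym u v : adj u v = adj v u.
Proof. by rewrite /Defs.adj eq_sym th_sym. Qed.
Lemma anti_sym u v : anti u v = anti v u.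
Proof. by rewrite /Defs.anti eq_sym th_sym. Qed.
Lemma santi_sym u v : santi u v = santi v u.
Proof. by rewrite /Defs.santi eq_sym th_sym. Qed.
Lemma sadj_sym u v : sadj u v = sadj v u.
Proof. by rewrite /Defs.sadj eq_sym th_sym. Qed.
Lemma semi_sym u v : semi u v = semi v u.
Proof. by rewrite /Defs.semi eq_sym th_sym. Qed.
Lemma adj_neq u v : adj u v -> u != v.
Proof. by case/andP. Qed.
Lemma anti_neq u v : anti u v -> u != v.
Proof. by case/andP. Qed.
Lemma santi_neq u v : santi u v -> u != v.
Proof. by case/andP. Qed.
Lemma semi_neq u v : semi u v -> u != v.
Proof. by case/andP. Qed.
Lemma santi_nadj u v : santi u v -> ~~ adj u v.
Proof. by rewrite /Defs.santi /Defs.adj; case: (th u v); rewrite ?andbF. Qed.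
Lemma santi_anti u v : santi u v -> anti u v.
Proof. by rewrite /Defs.santi /Defs.anti; case: (th u v); rewrite ?andbF. Qed.
Lemma semi_adj u v : semi u v -> adj u v.
Proof. by rewrite /Defs.semi /Defs.adj; case: (th u v); rewrite ?andbF. Qed.
Lemma semi_anti u v : semi u v -> anti u v.
Proof. by rewrite /Defs.semi /Defs.anti; case: (th u v); rewrite ?andbF. Qed.
Lemma nadj_santi u v : u != v -> ~~ adj u v -> santi u v.
Proof. by rewrite /Defs.santi /Defs.adj => ->; case: (th u v). Qed.
Lemma adj_nsanti u v : adj u v -> ~~ santi u v.
Proof. by rewrite /Defs.santi /Defs.adj; case: (u != v); case: (th u v). Qed.

Lemma card2_le (S : {set T}) a b : a != b -> a \in S -> b \in S -> 1 < #|S|.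
Proof.
move=> ab aS bS; rewrite (cardsD1 a) aS (cardsD1 b) !inE eq_sym ab bS /=.
by rewrite add1n.
Qed.
Lemma card3_le (S : {set T}) a b c : a != b -> b != c -> a != c ->
  a \in S -> b \in S -> c \in S -> 2 < #|S|.
Proof.
move=> ab bc ac aS bS cS; rewrite (cardsD1 a) aS (cardsD1 b) !inE eq_sym ab bS /=.
rewrite (cardsD1 c) !inE (eq_sym c b) bc (eq_sym c a) ac cS /=.
by [].
Qed.

Variables X Y : {set T}.
Hypothesis gp : good_partition th X Y.

Lemma XorY z : (z \in X) \/ (z \in Y).
Proof.
case: gp => _ [HU _].
have : z \in X :|: Y by rewrite HU inE.
by rewrite inE => /orP[]; [left|right].
Qed.
Lemma notXY z : z \in X -> z \in Y -> False.
Proof.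
case: gp => Hd _ zX zY.
by rewrite (disjointFr Hd zX) in zY.
Qed.
Lemma XY_nsemi x y : x \in X -> y \in Y -> ~~ semi x y.
Proof.
case: gp => _ [_ [_ [_ [Hs _]]]] xX yY; apply/negP => /Hs; tauto.
Qed.
Lemma XY_adj x y : x \in X -> y \in Y -> adj x y -> sadj x y.
Proof.
move=> xX yY; have := XY_nsemi xX yY.
by rewrite /Defs.semi /Defs.adj /Defs.sadj; case: (x != y); case: (th x y).
Qed.
Lemma XY_anti x y : x \in X -> y \in Y -> anti x y -> ~~ adj x y.
Proof.
move=> xX yY; have := XY_nsemi xX yY.
by rewrite /Defs.semi /Defs.adj /Defs.anti; case: (x != y); case: (th x y).
Qed.
Lemma sadj_nanti u v : sadj u v -> ~~ anti u v.
Proof. by rewrite /Defs.sadj /Defs.anti; case: (u != v); case: (th u v). Qed.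
Lemma XY_adj_nanti x y : x \in X -> y \in Y -> adj x y -> ~~ anti x y.
Proof. by move=> xX yY /(XY_adj xX yY) /sadj_nanti. Qed.

Lemma inCX x z : x \in X -> z \in X -> adj x z -> z \in compX th X x.
Proof. by move=> xX zX a; rewrite inE; apply: connect1; rewrite /rel_in a xX zX. Qed.
Lemma inCY y z : y \in Y -> z \in Y -> anti y z -> z \in acompY th Y y.
Proof. by move=> xX zX a; rewrite inE; apply: connect1; rewrite /rel_in a xX zX. Qed.
Lemma inCX0 x : x \in compX th X x.
Proof. by rewrite inE connect0. Qed.
Lemma inCY0 x : x \in acompY th Y x.
Proof. by rewrite inE connect0. Qed.

Lemma X3 a b c : a \in X -> b \in X -> c \in X -> adj a b -> adj b c -> a != c -> False.
Proof.
move=> aX bX cX ab bc ac.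
case: gp => _ [_ [HX _]].
have := HX b bX.
have := card3_le (S := compX th X b) (adj_neq ab) (adj_neq bc) ac.
rewrite inCX0 (inCX bX aX) 1?adj_sym // (inCX bX cX) //.
by move=> /(_ isT isT isT); case: (#|_|) => [|[|[|]]].
Qed.
Lemma Y3 a b c : a \in Y -> b \in Y -> c \in Y -> anti a b -> anti b c -> a != c -> False.
Proof.
move=> aX bX cX ab bc ac.
case: gp => _ [_ [_ [HY _]]].
have := HY b bX.
have := card3_le (S := acompY th Y b) (anti_neq ab) (anti_neq bc) ac.
rewrite inCY0 (inCY bX aX) 1?anti_sym // (inCY bX cX) //.
by move=> /(_ isT isT isT); case: (#|_|) => [|[|[|]]].
Qed.

Lemma cross1 x y y' : x \in X -> y \in Y -> y' \in Y -> anti y y' ->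
  adj x y' = ~~ adj x y.
Proof.
move=> xX yY y'Y yy'.
case: gp => _ [_ [_ [_ [_ Hc]]]].
have [H1 _] := Hc x y xX yY.
have [Hs Ha] := H1 x (inCX0 x).
have iy := inCY0 y; have iy' := inCY yY y'Y yy'.
have ne := anti_neq yy'.
case A1: (adj x y); case A2: (adj x y') => //=.
- have m1 : y \in [set z in acompY th Y y | sadj x z] by rewrite in_set iy (XY_adj xX yY A1).
  have m2 : y' \in [set z in acompY th Y y | sadj x z] by rewrite in_set iy' (XY_adj xX y'Y A2).
  move: Hs; have := card2_le ne m1 m2.
  by case: (#|_|) => [|[|]].
- have xy : x != y by apply/negP => /eqP e; move: (xX); rewrite e => /notXY; apply.
  have xy' : x != y' by apply/negP => /eqP e; move: (xX); rewrite e => /notXY; apply.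
  have m1 : y \in [set z in acompY th Y y | santi x z] by rewrite in_set iy nadj_santi ?A1.
  have m2 : y' \in [set z in acompY th Y y | santi x z] by rewrite in_set iy' nadj_santi ?A2.
  move: Ha; have := card2_le ne m1 m2.
  by case: (#|_|) => [|[|]].
Qed.

Lemma cross2 y x x' : y \in Y -> x \in X -> x' \in X -> adj x x' ->
  adj y x' = ~~ adj y x.
Proof.
move=> yY xX x'X xx'.
case: gp => _ [_ [_ [_ [_ Hc]]]].
have [_ H2] := Hc x y xX yY.
have [Hs Ha] := H2 y (inCY0 y).
have ix := inCX0 x; have ix' := inCX xX x'X xx'.
have ne := adj_neq xx'.
have yx : y != x by apply/negP => /eqP e; move: (xX); rewrite -e => /notXY; apply.
have yx' : y != x' by apply/negP => /eqP e; move: (x'X); rewrite -e => /notXY; apply.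
case A1: (adj y x); case A2: (adj y x') => //=.
- have m1 : x \in [set z in compX th X x | sadj y z] by rewrite in_set ix sadj_sym (XY_adj xX yY) // adj_sym.
  have m2 : x' \in [set z in compX th X x | sadj y z] by rewrite in_set ix' sadj_sym (XY_adj x'X yY) // adj_sym.
  move: Hs; have := card2_le ne m1 m2.
  by case: (#|_|) => [|[|]].
- have m1 : x \in [set z in compX th X x | santi y z] by rewrite in_set ix nadj_santi ?A1.
  have m2 : x' \in [set z in compX th X x | santi y z] by rewrite in_set ix' nadj_santi ?A2.
  move: Ha; have := card2_le ne m1 m2.
  by case: (#|_|) => [|[|]].
Qed.


Definition ipath (q : nat -> T) (k : nat) :=
  (forall i, i < k -> adj (q i) (q i.+1)) /\
  (forall i j, i.+1 < j -> j <= k -> anti (q i) (q j)) /\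
  (forall i j, i <= k -> j <= k -> q i = q j -> i = j).

Lemma even_of u v : santi u v ->
  (forall q k, ipath q k -> q 0 = u -> q k = v -> odd k -> False) ->
  even_pair th u v.
Proof.
move=> Huv H; split => // p [[Hu Hp] [Hh [Hl Hs]]].
apply/negP => Hodd.
have Esz := prednK Hs.
apply: (H (nth u p) (size p).-1 _ _ _ Hodd).
- split; [|split].
  + move=> i Hi; have h : i.+1 < size p by lia.
    have [H1 _] := Hp u i i.+1 (ltnSn i) h.
    exact: H1.
  + move=> i j Hij Hj; have h1 : i < j by lia.
    have h2 : j < size p by lia.
    have [_ H2] := Hp u i j h1 h2.
    exact: H2.
  + move=> i j Hi Hj E; apply/eqP.
    have h1 : i < size p by lia.
    have h2 : j < size p by lia.
    by rewrite -(nth_uniq u h1 h2 Hu) E.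
- by case: p Hh Hs {Hp Hu Hl Hodd Esz}.
- by rewrite nth_last.
Qed.

Lemma ipos q k i j : ipath q k -> i < j -> j <= k -> ~~ anti (q i) (q j) -> j = i.+1.
Proof.
move=> [_ [Hn _]] ij jk na.
case: (ltngtP i.+1 j) => h; [|lia|by []].
by rewrite (Hn i j h jk) in na.
Qed.

Lemma ineq q k i j : ipath q k -> i <= k -> j <= k -> i != j -> q i != q j.
Proof. move=> [_ [_ Hu]] ik jk ij; apply/negP => /eqP E. move: ij. rewrite (Hu i j ik jk E). by rewrite eqxx. Qed.

Lemma k_ge3 q k u v : ipath q k -> q 0 = u -> q k = v -> santi u v -> odd k -> 3 <= k.
Proof.
move=> [Ha _] q0 qk s ok.
case: k Ha q0 qk ok => [|[|k]] Ha q0 qk ok //.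
- by move: (Ha 0 isT); rewrite q0 qk => /adj_nsanti; rewrite s.
- by case: k ok {Ha q0 qk}.
Qed.

Lemma XY_ne x y : x \in X -> y \in Y -> x != y.
Proof. by move=> xX yY; apply/negP => /eqP e; move: xX; rewrite e => /notXY; apply. Qed.

Lemma L1 x y : x \in X -> y \in Y -> santi x y ->
  (forall c, c \in Y -> c != y -> ~~ anti c y) -> even_pair th x y.
Proof.
move=> xX yY sxy Hs; apply: even_of => // q k P q0 qk ok.
have k3 := k_ge3 P q0 qk sxy ok.
have [Ha [Hn Hu]] := P.
have kn2 : k != 2 by apply/negP => /eqP e; rewrite e in ok.
have kn4 : k != 4 by apply/negP => /eqP e; rewrite e in ok.
have z1X : q 1 \in X.
  case: (XorY (q 1)) => // h; exfalso.
  have ne : q 1 != y by rewrite -qk (ineq P) //; li.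
  have := Hs _ h ne; rewrite -qk => na.
  have := ipos P _ _ na; li.
have a01 : adj x (q 1) by rewrite -q0; apply: Ha; li.
case: (XorY (q 2)) => h.
- apply: (X3 xX z1X h a01 (Ha 1 _)); first li.
  by rewrite -q0 (ineq P) //; li.
- have ne : q 2 != y by rewrite -qk (ineq P) //; li.
  have := Hs _ h ne; rewrite -qk => na.
  have k3x := ipos P k3 (leqnn k) na.
  have := cross2 yY xX z1X a01.
  rewrite (adj_sym y x) (negbTE (santi_nadj sxy)) /= => ay1.
  have := Hn 1 k; rewrite qk => /(_ ltac:(li) (leqnn k)).
  by apply/negP; apply: XY_adj_nanti => //; rewrite adj_sym.
Qed.

Lemma L2 a b : a \in Y -> b \in Y -> santi a b ->
  (forall x z, x \in X -> z \in X -> ~~ adj x z) -> even_pair th a b.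
Proof.
move=> aY bY sab HX; apply: even_of => // q k P q0 qk ok.
have k3 := k_ge3 P q0 qk sab ok.
have [Ha [Hn Hu]] := P.
have kn2 : k != 2 by apply/negP => /eqP e; rewrite e in ok.
have kn4 : k != 4 by apply/negP => /eqP e; rewrite e in ok.
have aab := santi_anti sab.
have z1X : q 1 \in X.
  case: (XorY (q 1)) => // h; exfalso.
  have ne : q 1 != a by rewrite -q0 (ineq P) //; li.
  have := Hn 1 k; rewrite qk => /(_ ltac:(li) (leqnn k)) an.
  apply: (Y3 h bY aY an _ ne); by rewrite anti_sym.
case: (XorY (q 2)) => h.
- by move: (HX _ _ z1X h); rewrite Ha //; li.
- have ne : q 2 != b by rewrite -qk (ineq P) //; li.
  have := Hn 0 2; rewrite q0 => /(_ isT ltac:(li)) an.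
  by apply: (Y3 h aY bY _ aab ne); rewrite anti_sym.
Qed.

Lemma L3 x a b : x \in X -> a \in Y -> b \in Y -> a != b -> anti a b -> santi x a ->
  (forall c, c \in Y -> c != a -> c != b -> adj x c) -> even_pair th x a.
Proof.
move=> xX aY bY ab aab sxa Hc; apply: even_of => // q k P q0 qk ok.
have k3 := k_ge3 P q0 qk sxa ok.
have [Ha [Hn Hu]] := P.
have kn2 : k != 2 by apply/negP => /eqP e; rewrite e in ok.
have kn4 : k != 4 by apply/negP => /eqP e; rewrite e in ok.
have Fc : forall i, 0 < i < k -> q i \in Y -> q i = b.
  move=> i /andP[i0 ik] h; apply/eqP; apply: contraT => nb.
  have na : q i != a by rewrite -qk (ineq P) //; li.
  have axi := Hc _ h na nb.
  have := XY_adj_nanti xX h axi; rewrite -q0 => /(ipos P i0 (ltnW ik)) i1.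
  have : ~~ anti (q i) a.
    by apply/negP => an; apply: (Y3 h aY bY an aab nb).
  rewrite -qk => /(ipos P ik (leqnn k)); li.
have xb : adj x b by rewrite (cross1 xX aY bY aab) (negbTE (santi_nadj sxa)).
have Fb : forall i, 0 < i < k -> q i = b -> i = 1.
  move=> i /andP[i0 ik] e.
  have := XY_adj_nanti xX bY xb; rewrite -q0 -e => /(ipos P i0 (ltnW ik)) //.
have a01 : adj x (q 1) by rewrite -q0; apply: Ha; li.
case: (XorY (q 1)) => h1.
- case: (XorY (q 2)) => h2.
  + apply: (X3 xX h1 h2 a01 (Ha 1 _)); first li.
    by rewrite -q0 (ineq P) //; li.
  + by move: (Fb 2 ltac:(li) (Fc 2 ltac:(li) h2)).
- have e1 := Fc 1 ltac:(li) h1.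
  have h2 : q 2 \in X.
    case: (XorY (q 2)) => // h2.
    by move: (Fb 2 ltac:(li) (Fc 2 ltac:(li) h2)).
  have a12 : adj (q 1) (q 2) by apply: Ha; li.
  case: (ltngtP k 3) => k3'; first li.
  +
    have h3 : q 3 \in X.
      case: (XorY (q 3)) => // h3.
      by move: (Fb 3 ltac:(li) (Fc 3 ltac:(li) h3)).
    case: (XorY (q 4)) => h4.
    * apply: (X3 h2 h3 h4 (Ha 2 _) (Ha 3 _)); try li.
      by rewrite (ineq P) //; li.
    * by move: (Fb 4 ltac:(li) (Fc 4 ltac:(li) h4)).
  + subst k.
    have a23 : adj (q 2) a by rewrite -qk; apply: Ha.
    have := cross1 h2 aY bY aab; rewrite a23 -e1 adj_sym a12.
    by [].
Qed.

Lemma L6 u v : u \in X -> v \in X -> santi u v ->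
  (forall c, c \in Y -> adj u c = adj v c) -> even_pair th u v.
Proof.
move=> uX vX suv Hc; apply: even_of => // q k P q0 qk ok.
have k3 := k_ge3 P q0 qk suv ok.
have [Ha [Hn Hu]] := P.
have kn2 : k != 2 by apply/negP => /eqP e; rewrite e in ok.
have kn4 : k != 4 by apply/negP => /eqP e; rewrite e in ok.
have a01 : adj u (q 1) by rewrite -q0; apply: Ha; li.
have z1X : q 1 \in X.
  case: (XorY (q 1)) => // h; exfalso.
  have : adj v (q 1) by rewrite -Hc.
  move=> /(XY_adj_nanti vX h); rewrite anti_sym -qk => /(ipos P _ (leqnn k)).
  li.
have akv : adj (q k.-1) v by rewrite -qk; have := Ha k.-1; rewrite prednK; [apply|]; li.
have wX : q k.-1 \in X.
  case: (XorY (q k.-1)) => // h; exfalso.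
  have : adj u (q k.-1) by rewrite Hc // adj_sym.
  move=> /(XY_adj_nanti uX h); rewrite -q0 => /(ipos P _ _); li.
have h2 : q 2 \in Y.
  case: (XorY (q 2)) => // h2; exfalso.
  apply: (X3 uX z1X h2 a01 (Ha 1 _)); first li.
  by rewrite -q0 (ineq P) //; li.
have nu2 : ~~ adj u (q 2).
  by apply: (XY_anti uX h2); rewrite -q0; apply: Hn; li.
have nv2 : ~~ adj v (q 2) by rewrite -Hc.
have := cross2 h2 vX wX; rewrite adj_sym akv => /(_ isT).
rewrite (adj_sym (q 2) v) (negbTE nv2) /= => a2w.
have := XY_adj_nanti wX h2; rewrite adj_sym a2w => /(_ isT).
rewrite anti_sym.
case: (ltngtP 3 k.-1) => kk.
- by rewrite Hn //; li.
- have k4 : k = 3 by li.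
  subst k; by move: (h2); rewrite (_ : 2 = 3.-1) // => /(notXY wX).
- by move: ok; have -> : k = 4 by li.
Qed.

Lemma semi_side a b : semi a b -> (a \in X -> b \in X) /\ (a \in Y -> b \in Y).
Proof.
move=> s; split => h.
- case: (XorY b) => // hb; by move: (XY_nsemi h hb); rewrite s.
- case: (XorY b) => // hb; by move: (XY_nsemi hb h); rewrite semi_sym s.
Qed.

Lemma semi_nbr p q z : semi p q -> semi p z -> z = q.
Proof.
move=> spq spz; apply/eqP; apply: contraT => nz; exfalso.
have [sX sY] := semi_side spq; have [zX zY] := semi_side spz.
case: (XorY p) => hp.
- apply: (X3 (zX hp) hp (sX hp) _ (semi_adj spq) nz).
  by rewrite adj_sym; apply: semi_adj.
- apply: (Y3 (zY hp) hp (sY hp) _ (semi_anti spq) nz).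
  by rewrite anti_sym; apply: semi_anti.
Qed.

Lemma semi_clos p q z : semi p q -> connect semi p z -> z \in [set p; q].
Proof.
move=> spq.
have H1 : forall a b, semi a b -> a \in [set p; q] -> b \in [set p; q].
  move=> a b sab; rewrite !inE => /orP[] /eqP ea; subst a.
  + by rewrite (semi_nbr spq sab) eqxx orbT.
  + have sqp : semi q p by rewrite semi_sym.
    by rewrite (semi_nbr sqp sab) eqxx.
have Hc : closed semi [set p; q].
  move=> a b sab; apply/idP/idP; first exact: H1.
  by apply: H1; rewrite semi_sym.
move=> /(closed_connect Hc) <-.
by rewrite !inE eqxx.
Qed.

Lemma Dset_semi z : z \in Dset th -> exists w, semi z w.
Proof.
rewrite inE => H; apply: NNPP => nw.
have sub : scomp th z \subset [set z].
  apply/subsetP => y; rewrite !inE => /connectP [s ps ->].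
  case: s ps => [|w s] //= /andP[szw _].
  by exfalso; apply: nw; exists w.
have le := subset_leq_card sub; rewrite cards1 in le.
by rewrite ltnNge le in H.
Qed.

Lemma semi_Dset z w : semi z w -> z \in Dset th.
Proof.
move=> s; rewrite inE; apply: (card2_le (a := z) (b := w)).
- exact: semi_neq s.
- by rewrite inE connect0.
- by rewrite inE connect1.
Qed.

Lemma semi_uniq p q c d : inF th -> semi p q -> semi c d -> c \in [set p; q].
Proof.
move=> [_ [Hu _]] spq scd.
have e : scomp th p = scomp th c.
  apply: Hu.
  + exists p; split => //; have := semi_Dset spq; by rewrite inE.
  + exists c; split => //; have := semi_Dset scd; by rewrite inE.
apply: (semi_clos spq).
have : c \in scomp th c by rewrite inE connect0.
by rewrite -e inE.
Qed.

Lemma Dset_sub p q z : inF th -> semi p q -> z \in Dset th -> z \in [set p; q].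
Proof. move=> F spq /Dset_semi [w szw]; exact: semi_uniq F spq szw. Qed.

Lemma scomp_pair p q : semi p q -> scomp th p = [set p; q].
Proof.
move=> spq; apply/setP => z; apply/idP/idP.
- by rewrite inE; apply: semi_clos.
- rewrite !inE => /orP[] /eqP ->; [exact: connect0|exact: connect1].
Qed.

Lemma nedges1 p q : semi p q -> nedges th (scomp th p) = 1.
Proof.
move=> spq; rewrite /nedges (scomp_pair spq).
have ne := semi_neq spq.
have -> : [set pr : T * T | (pr.1 \in [set p; q]) && (pr.2 \in [set p; q]) && semi pr.1 pr.2]
   = [set (p, q); (q, p)].
  apply/setP => [[a b]]; rewrite !inE /=; apply/idP/idP.
  - move=> /andP[/andP[ha hb] s].
    case/orP: ha => /eqP ea; case/orP: hb => /eqP eb; subst a b.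
    + by move: (semi_neq s); rewrite eqxx.
    + by rewrite eqxx.
    + by rewrite eqxx orbT.
    + by move: (semi_neq s); rewrite eqxx.
  - case/orP => /eqP [-> ->]; rewrite !eqxx ?orbT //=.
    by rewrite semi_sym.
rewrite cards2.
have -> : (p, q) != (q, p) by apply/negP => /eqP [e _]; by rewrite e eqxx in ne.
by [].
Qed.

Lemma nadj_anti u v : u != v -> ~~ adj u v -> anti u v.
Proof. by rewrite /Defs.anti /Defs.adj => ->; case: (th u v). Qed.
Lemma nanti_adj u v : u != v -> ~~ anti u v -> adj u v.
Proof. by rewrite /Defs.anti /Defs.adj => ->; case: (th u v). Qed.
Lemma anti_semi u v : anti u v -> ~~ santi u v -> semi u v.
Proof. by rewrite /Defs.anti /Defs.santi /Defs.semi; case: (u != v); case: (th u v). Qed.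
Lemma semi_nsanti u v : semi u v -> ~~ santi u v.
Proof. by rewrite /Defs.santi /Defs.semi; case: (u != v); case: (th u v). Qed.

Lemma ah6 x x' a b c d :
  anti x b -> adj x a -> adj x x' -> adj x c -> anti x d ->
  anti b a -> adj b x' -> adj b c -> adj b d ->
  anti a x' -> adj a c -> adj a d ->
  anti x' c -> adj x' d -> anti c d ->
  uniq [:: x; b; a; x'; c; d] -> has_antihole th 6.
Proof.
move=> H01 H02 H03 H04 H05 H12 H13 H14 H15 H23 H24 H25 H34 H35 H45 U.
exists [:: x; b; a; x'; c; d]; split; first by []; split; first by []; split; first by [].
move=> d0 i j ij j6.
case: i ij => [|[|[|[|[|[|i]]]]]] ij; case: j ij j6 => [|[|[|[|[|[|j]]]]]] ij j6 //=.
Qed.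

Lemma noah_or x x' a b c d : x \in X -> x' \in X -> adj x x' ->
  a \in Y -> b \in Y -> c \in Y -> d \in Y -> anti a b -> anti c d ->
  c != a -> c != b -> adj x a -> adj x c -> has_antihole th 6.
Proof.
move=> xX x'X xx' aY bY cY dY ab cd ca cb xa xc.
have nab := anti_neq ab; have ncd := anti_neq cd.
have da : d != a.
  apply/negP => /eqP e; subst d; apply: (Y3 cY aY bY cd ab cb).
have db : d != b.
  apply/negP => /eqP e; subst d; apply: (Y3 cY bY aY cd _ ca); by rewrite anti_sym.
have xb : ~~ adj x b by rewrite (cross1 xX aY bY ab) xa.
have xd : ~~ adj x d by rewrite (cross1 xX cY dY cd) xc.
have x'b : adj x' b by rewrite adj_sym (cross2 bY xX x'X xx') adj_sym.
have x'd : adj x' d by rewrite adj_sym (cross2 dY xX x'X xx') adj_sym.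
have x'a : ~~ adj x' a by rewrite adj_sym (cross2 aY xX x'X xx') adj_sym xa.
have x'c : ~~ adj x' c by rewrite adj_sym (cross2 cY xX x'X xx') adj_sym xc.
have Yad : forall s t u, s \in Y -> t \in Y -> u \in Y -> anti s t -> u != s -> u != t ->
   adj t u.
  move=> s t u sY tY uY st us ut; apply: nanti_adj; first by rewrite eq_sym.
  by apply/negP => tu; apply: (Y3 sY tY uY st tu); rewrite eq_sym.
have ba : anti b a by rewrite anti_sym.
have dc : anti d c by rewrite anti_sym.
apply: (ah6 (x := x) (x' := x') (a := a) (b := b) (c := c) (d := d)).
- by apply: nadj_anti => //; apply: XY_ne.
- done.
- done.
- done.
- by apply: nadj_anti => //; apply: XY_ne.
- done.
- by rewrite adj_sym.
- exact: (Yad a b c aY bY cY ab ca cb).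
- exact: (Yad a b d aY bY dY ab da db).
- by apply: nadj_anti; [rewrite eq_sym; apply: XY_ne| rewrite adj_sym].
- exact: (Yad b a c bY aY cY ba cb ca).
- exact: (Yad b a d bY aY dY ba db da).
- by apply: nadj_anti => //; apply: XY_ne.
- done.
- done.
- have xx'n := adj_neq xx'.
  have nX := XY_ne xX; have nX' := XY_ne x'X.
  rewrite /= !inE !negb_or (nX b bY) (nX a aY) xx'n (nX c cY) (nX d dY).
  rewrite (eq_sym b a) nab (eq_sym b x') (nX' b bY) (eq_sym b c) cb (eq_sym b d) db.
  rewrite (eq_sym a x') (nX' a aY) (eq_sym a c) ca (eq_sym a d) da.
  by rewrite (nX' c cY) (nX' d dY) ncd.
Qed.

Lemma noah x x' a b c d : x \in X -> x' \in X -> adj x x' ->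
  a \in Y -> b \in Y -> c \in Y -> d \in Y -> anti a b -> anti c d ->
  c != a -> c != b -> has_antihole th 6.
Proof.
move=> xX x'X xx' aY bY cY dY ab cd ca cb.
have nab := anti_neq ab; have ncd := anti_neq cd.
have da : d != a.
  apply/negP => /eqP e; subst d; apply: (Y3 cY aY bY cd ab cb).
have db : d != b.
  apply/negP => /eqP e; subst d; apply: (Y3 cY bY aY cd _ ca); by rewrite anti_sym.
have ba : anti b a by rewrite anti_sym.
have dc : anti d c by rewrite anti_sym.
case xa: (adj x a); case xc: (adj x c).
- exact: (noah_or xX x'X xx' aY bY cY dY ab cd ca cb).
- have xd : adj x d by rewrite (cross1 xX cY dY cd) xc.
  exact: (noah_or xX x'X xx' aY bY dY cY ab dc da db).
- have xb : adj x b by rewrite (cross1 xX aY bY ab) xa.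
  exact: (noah_or xX x'X xx' bY aY cY dY ba cd cb ca).
- have xd : adj x d by rewrite (cross1 xX cY dY cd) xc.
  have xb : adj x b by rewrite (cross1 xX aY bY ab) xa.
  exact: (noah_or xX x'X xx' bY aY dY cY ba dc db da).
Qed.

Definition singY (y : T) := forall c, c \in Y -> c != y -> ~~ anti c y.

Definition Y1 := forall a b c, a \in Y -> b \in Y -> c \in Y -> anti a b ->
  c != a -> c != b -> singY c.

Lemma Kl x y : Y1 -> x \in X -> y \in Y -> santi x y ->
  exists y', y' \in Y /\ even_pair th x y'.
Proof.
move=> HY1 xX yY sxy.
case: (classic (exists y', [/\ y' \in Y, singY y' & santi x y'])).
- move=> [y' [y'Y sy sxy']]; exists y'; split => //; exact: L1.
- move=> Hno.
  have [b [bY [by_ ab]]] : exists b, b \in Y /\ b != y /\ anti b y.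
    apply: NNPP => Hb; apply: Hno; exists y; split => //.
    move=> c cY cy; apply/negP => acy; apply: Hb; by exists c.
  exists y; split => //.
  apply: (L3 (b := b)) => //.
  + by rewrite eq_sym.
  + by rewrite anti_sym.
  + move=> c cY cy cb; apply: contraT => nxc; exfalso; apply: Hno.
    exists c; split => //.
    * apply: (HY1 y b c) => //; by rewrite anti_sym.
    * by apply: nadj_santi => //; apply: XY_ne.
Qed.

Definition condA := (exists a b, [/\ a \in Y, b \in Y & santi a b]) /\
  (forall x z, x \in X -> z \in X -> ~~ adj x z).

Lemma A_pair : condA -> exists a b, [/\ a \in Y, b \in Y, santi a b & even_pair th a b].
Proof. move=> [[a [b [aY bY sab]]] HX]; exists a, b; split => //; exact: L2. Qed.

Lemma Y1_holds : inF th -> ~ has_antihole th 6 -> ~ condA -> Y1.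
Proof.
move=> F nah nA a b c aY bY cY ab ca cb d dY dc; apply/negP => adc.
case: (classic (exists x x', [/\ x \in X, x' \in X & adj x x'])).
- move=> [x [x' [xX x'X xx']]]; apply: nah.
  apply: (noah xX x'X xx' aY bY cY dY ab _ ca cb); by rewrite anti_sym.
- move=> nX.
  have nsY : forall s t, s \in Y -> t \in Y -> ~~ santi s t.
    move=> s t sY tY; apply/negP => sst; apply: nA; split; first by exists s, t.
    move=> x z xX zX; apply/negP => axz; apply: nX; by exists x, z.
  have sab : semi a b by apply: anti_semi => //; apply: nsY.
  have scd : semi c d by apply: anti_semi; [rewrite anti_sym|apply: nsY].
  have := semi_uniq F sab scd; rewrite !inE; by rewrite (negbTE ca) (negbTE cb).
Qed.

Lemma part1 : inF th -> ~ has_antihole th 6 -> complete th \/ exists u v, even_pair th u v.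
Proof.
move=> F nah.
case: (classic condA) => [HA|nA].
  by right; have [a [b [_ _ _ e]]] := A_pair HA; exists a, b.
have HY1 := Y1_holds F nah nA.
case: (classic (exists x y, [/\ x \in X, y \in Y & santi x y])).
  move=> [x [y [xX yY sxy]]]; right.
  have [y' [_ e]] := Kl HY1 xX yY sxy; by exists x, y'.
move=> HXY.
have aXY : forall x y, x \in X -> y \in Y -> adj x y.
  move=> x y xX yY; apply: contraT => nxy; exfalso; apply: HXY; exists x, y; split => //.
  by apply: nadj_santi => //; apply: XY_ne.
case: (classic (exists u v, [/\ u \in X, v \in X & santi u v])).
  move=> [u [v [uX vX suv]]]; right; exists u, v.
  by apply: L6 => // c cY; rewrite (aXY u c) ?(aXY v c).
move=> HXX.
left => s t _ _ st; apply: contraT => nst; exfalso.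
have sst := nadj_santi st nst.
case: (XorY s) => hs; case: (XorY t) => ht.
- by apply: HXX; exists s, t.
- by apply: HXY; exists s, t.
- by apply: HXY; exists t, s; rewrite santi_sym.
- have [x [z [xX zX xz]]] : exists x z, [/\ x \in X, z \in X & adj x z].
    apply: NNPP => H; apply: nA; split; first by exists s, t.
    move=> x z xX zX; apply/negP => axz; apply: H; by exists x, z.
  have := cross1 xX hs ht (santi_anti sst).
  by rewrite (aXY x t xX ht) (aXY x s xX hs).
Qed.

Lemma notD_santiY a b : a \in Y -> b \in Y -> santi a b -> a \notin Dset th.
Proof.
move=> aY bY sab; apply/negP => /Dset_semi [w saw].
have wY := (semi_side saw).2 aY.
case: (eqVneq w b) => [e|wb].
- by subst w; move: (semi_nsanti saw); rewrite sab.
- apply: (Y3 wY aY bY _ (santi_anti sab) wb).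
  by rewrite anti_sym; apply: semi_anti.
Qed.

Lemma inW r s : (s \in ~: (Dset th :|: nbhd th r)) = (s \notin Dset th) && ~~ adj r s.
Proof. by rewrite in_setC in_setU [s \in nbhd _ _]inE negb_or. Qed.

Lemma notclique_ex (S : {set T}) : ~ clique th S ->
  exists s t, [/\ s \in S, t \in S, s != t & ~~ adj s t].
Proof.
move=> nc; apply: NNPP => H; apply: nc => s t sS tS st.
apply: contraT => nst; exfalso; apply: H; by exists s, t.
Qed.

Lemma partY r r' : inF th -> Y1 -> semi r r' -> r \in Y ->
  ~ clique th (~: (Dset th :|: nbhd th r)) ->
  exists u v, even_pair th u v /\ u \notin Dset th /\ v \notin Dset th.
Proof.
move=> F HY1 srr' rY nc.
have [u [v [uW vW uv nuv]]] := notclique_ex nc.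
move: uW vW; rewrite !inW => /andP[uD ru] /andP[vD rv].
have r'Y := (semi_side srr').2 rY.
have arr' := semi_anti srr'.
have rD := semi_Dset srr'.
have r'D : r' \in Dset th by apply: (semi_Dset (w := r)); rewrite semi_sym.
have inX : forall z, z \notin Dset th -> ~~ adj r z -> z \in X.
  move=> z zD rz; case: (XorY z) => // zY; exfalso.
  have zr : z != r by apply/negP => /eqP e; rewrite e rD in zD.
  have zr' : z != r' by apply/negP => /eqP e; rewrite e r'D in zD.
  have := HY1 r r' z rY r'Y zY arr' zr zr' r rY; rewrite eq_sym zr => /(_ isT) nrz.
  by move: rz; rewrite (nanti_adj _ nrz) // eq_sym.
have uX := inX u uD ru; have vX := inX v vD rv.
have suv := nadj_santi uv nuv.
case: (classic (exists y, [/\ y \in Y, singY y & (santi u y || santi v y)])).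
- move=> [y [yY sy /orP suy]].
  have yD : y \notin Dset th.
    apply/negP => /(Dset_sub F srr'); rewrite !inE => /orP[] /eqP e; subst y.
    + have r'r : r' != r by rewrite eq_sym (semi_neq srr').
      by move: (sy r' r'Y r'r); rewrite anti_sym arr'.
    + by move: (sy r rY (semi_neq srr')); rewrite arr'.
  case: suy => s.
  + by exists u, y; split => //; apply: L1.
  + by exists v, y; split => //; apply: L1.
- move=> Hno; exists u, v; split => //.
  apply: L6 => // c cY.
  case: (eqVneq c r) => [->|cr].
    by rewrite (adj_sym u r) (adj_sym v r) (negbTE ru) (negbTE rv).
  case: (eqVneq c r') => [->|cr'].
    by rewrite (cross1 uX rY r'Y arr') (cross1 vX rY r'Y arr') (adj_sym u r) (adj_sym v r) ru rv.
  have sc := HY1 r r' c rY r'Y cY arr' cr cr'.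
  have Hu : adj u c.
    apply: contraT => nwc; exfalso; apply: Hno; exists c; split => //.
    by rewrite nadj_santi // XY_ne.
  have Hv : adj v c.
    apply: contraT => nwc; exfalso; apply: Hno; exists c; split => //.
    by rewrite (nadj_santi (u := v)) ?orbT // XY_ne.
  by rewrite Hu Hv.
Qed.


Lemma partX r : r \in X -> ~ clique th (~: (Dset th :|: nbhd th r)) ->
  ~ (exists x y, [/\ x \in X, x \notin Dset th, y \in Y & santi x y]) ->
  ~ (exists u v, [/\ u \in X, v \in X, u \notin Dset th, v \notin Dset th & santi u v]) ->
  False.
Proof.
move=> rX nc H1 H2.
have [s [t [sW tW st nst]]] := notclique_ex nc.
move: sW tW; rewrite !inW => /andP[sD rs] /andP[tD rt].
have sst := nadj_santi st nst.
case: (XorY s) => hs; case: (XorY t) => ht.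
- by apply: H2; exists s, t.
- by apply: H1; exists s, t.
- by apply: H1; exists t, s; rewrite santi_sym.
- have := cross1 rX hs ht (santi_anti sst).
  by rewrite (negbTE rt) (negbTE rs).
Qed.

Lemma part2 : inF th -> ~ has_antihole th 6 -> favorable th ->
  exists u v, even_pair th u v /\ u \notin Dset th /\ v \notin Dset th.
Proof.
move=> F nah Fav.
have [_ [_ [[u0 [v0 [s0 [u0D v0D]]]] F3]]] := Fav.
case: (classic (exists p q, semi p q)) => [[p [q spq]]|nsemi]; last first.
  have nD : forall z, z \notin Dset th.
    move=> z; apply/negP => /Dset_semi [w s]; apply: nsemi; by exists z, w.
  case: (part1 F nah) => [Hc|[u [v ev]]].
  - exfalso; have := Hc u0 v0 (in_setT _) (in_setT _) (santi_neq s0).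
    by rewrite (negbTE (santi_nadj s0)).
  - by exists u, v; rewrite !nD.
case: (classic condA) => [HA|nA].
  have [a [b [aY bY sab e]]] := A_pair HA.
  exists a, b; split => //; split; first exact: (notD_santiY aY bY sab).
  by apply: (notD_santiY bY aY); rewrite santi_sym.
have HY1 := Y1_holds F nah nA.
have sqp : semi q p by rewrite semi_sym.
case: (XorY p) => hp.
- have qX := (semi_side spq).1 hp.
  case: (classic (exists x y, [/\ x \in X, x \notin Dset th, y \in Y & santi x y])).
    move=> [x [y [xX xD yY sxy]]].
    have [y' [y'Y e]] := Kl HY1 xX yY sxy.
    exists x, y'; split => //; split => //.
    apply/negP => /(Dset_sub F spq); rewrite !inE => /orP[] /eqP ey; subst y'.
    + exact: (notXY hp y'Y).
    + exact: (notXY qX y'Y).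
  move=> H1.
  case: (classic (exists u v, [/\ u \in X, v \in X, u \notin Dset th, v \notin Dset th & santi u v])).
    move=> [u [v [uX vX uD vD suv]]]; exists u, v; split => //.
    have Ha : forall w c, w \in X -> w \notin Dset th -> c \in Y -> adj w c.
      move=> w c wX wD cY; apply: contraT => nwc; exfalso; apply: H1; exists w, c; split => //.
      by rewrite nadj_santi // XY_ne.
    by apply: L6 => // c cY; rewrite (Ha u c) ?(Ha v c).
  move=> H2; exfalso.
  case: (F3 p q spq (nedges1 spq)) => nc.
  + exact: (partX hp nc H1 H2).
  + exact: (partX qX nc H1 H2).
- have qY := (semi_side spq).2 hp.
  case: (F3 p q spq (nedges1 spq)) => nc.
  + exact: (partY F HY1 spq hp nc).
  + exact: (partY F HY1 sqp qY nc).
Qed.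

End Main.

Theorem theorem4p11 (T : finType) (th : T -> T -> adjv)
  (th_sym : forall u v, th u v = th v u) :
  inF th -> doubled th -> ~ has_antihole th 6 ->
  (complete th \/ exists u v, even_pair th u v) /\
  (favorable th ->
     exists u v, even_pair th u v /\ u \notin Dset th /\ v \notin Dset th).
Proof.
move=> F [X [Y gp]] nah; split.
- exact: (part1 th_sym gp F nah).
- exact: (part2 th_sym gp F nah).
Qed.
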